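(* In the model described in the context (with any $n$, $k$, $r$, $p$, $\epsilon$), let $p_b:=\frac{(1-\epsilon)^2}{2}$. Then for every $\delta\in(0,1)$, $$\Pr\Big[\max_{i\notin A_1} s_{1i}\ge np_b(1+\delta)^2\Big]\le (n-k)\,e^{-np_b\delta^2/3}+2r\,e^{-r\delta^2/6}.$$
   Context: Model: $\mathbf X$ is an $n\times n$ binary matrix. Let $\{A_i\}_{i=1}^r$ be a partition of the row indices and $\{B_i\}_{i=1}^r$ a partition of the column indices, with $|A_i|=|B_i|=k$ for all $i$ (so $n=rk$). Let $\xi_{ij}$, $1\le i,j\le r$, be i.i.d. Bernoulli$(1/2)$, and set $\mathbf X(a,b)=\xi_{ij}$ whenever $(a,b)\in A_i\times B_j$. The observed matrix $\mathbf Y$ with entries in $\{0,1,*\}$ is obtained by passing each entry of $\mathbf X$ independently through a binary symmetric channel with crossover probability $p\in[0,1/2)$, and then independently erasing each entry (replacing it with $*$) with probability $\epsilon\in[0,1)$. Row 1 belongs to $A_1$. Similarity: $s_{ij}=\sum_{l=1}^n \mathbf 1\{\mathbf Y(i,l)\ne *\}\mathbf 1\{\mathbf Y(j,l)\ne *\}\mathbf 1\{\mathbf Y(i,l)=\mathbf Y(j,l)\}$. *)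

(* Defs.v *)
From HB Require Import structures.
From mathcomp Require Import all_boot all_order all_algebra.
From mathcomp Require Import reals.
From mathcomp Require Import sequences exp.
Set Implicit Arguments. Unset Strict Implicit. Unset Printing Implicit Defensive.
Import Order.TTheory GRing.Theory Num.Theory.
Local Open Scope ring_scope.

(* Finite sample space: block labels xi (r x r), BSC flips (n x n), erasures (n x n). *)
Definition Omega (r n : nat) : finType :=
  ({ffun 'I_r * 'I_r -> bool} * {ffun 'I_n * 'I_n -> bool} * {ffun 'I_n * 'I_n -> bool})%type.

Definition bern (R : realType) (q : R) (b : bool) : R := if b then q else 1 - q.

Definition weight (R : realType) (r n : nat) (p eps : R) (w : Omega r n) : R :=
  (\prod_(ij : 'I_r * 'I_r) bern (1/2) (w.1.1 ij)) *
  (\prod_(uv : 'I_n * 'I_n) bern p (w.1.2 uv)) *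
  (\prod_(uv : 'I_n * 'I_n) bern eps (w.2 uv)).

Definition Prob (R : realType) (r n : nat) (p eps : R) (E : pred (Omega r n)) : R :=
  \sum_(w : Omega r n | E w) weight p eps w.

(* a u = block index i with u \in A_i ; b v = block index j with v \in B_j *)
Definition Xmat (r n : nat) (a b : 'I_n -> 'I_r) (w : Omega r n) (u v : 'I_n) : bool :=
  w.1.1 (a u, b v).

(* observed entry: None stands for the erasure symbol * *)
Definition Ymat (r n : nat) (a b : 'I_n -> 'I_r) (w : Omega r n) (u v : 'I_n)
  : option bool :=
  if w.2 (u, v) then None else Some (addb (Xmat a b w u v) (w.1.2 (u, v))).

Definition sim (r n : nat) (a b : 'I_n -> 'I_r) (w : Omega r n) (i j : 'I_n) : nat :=
  (\sum_(l < n)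
     [&& Ymat a b w i l != None, Ymat a b w j l != None & Ymat a b w i l == Ymat a b w j l])%N.

(* Main.v *)
Require Import Defs.
From HB Require Import structures.
From mathcomp Require Import all_boot all_order all_algebra.
From mathcomp Require Import reals ring lra.
From mathcomp Require Import sequences exp.
From mathcomp Require Import boolp classical_sets functions topology normedtype derive.
Import Order.TTheory GRing.Theory Num.Theory numFieldNormedType.Exports.
Local Open Scope ring_scope.
Section An.
Variable R : realType.

Lemma exp_pade (x : R) : 0 <= x -> x < 2 -> expR x * (2 - x) <= 2 + x.
Proof.
move=> x0 x2.
pose f : R -> R := (expR * (cst 2 - id)) - (cst 2 + id).
pose df : R -> R := fun y => expR y * (1 - y) - 1.
have hd (y : R) : is_derive y (1:R) f (df y).
  rewrite /f /df.
  apply: is_derive_eq.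
  change (expR y * (0 - 1) + (2 - y) * expR y - (0+1) = expR y * (1 - y) - 1).
  ring.
have dfle (y : R) : df y <= 0.
  rewrite /df subr_le0.
  have h1 := expR_ge1Dx (- y).
  rewrite expRN in h1.
  have ey := expR_gt0 y.
  rewrite -(@ler_pM2l _ (expR y)) // in h1.
  by rewrite mulfV ?gt_eqF // in h1.
case: (ltrP 0 x) => xpos; last first.
  have -> : x = 0 by apply/le_anti; rewrite xpos x0.
  by rewrite expR0; lra.
have [c _ hc] := @MVT R f df 0 x xpos (fun y _ => hd y)
  (derivable_within_continuous (fun y _ => let: DeriveDef h _ := hd y in h)).
have : f x - f 0 <= 0 by rewrite hc; apply: mulr_le0_ge0 => //; lra.
change (expR x * (2 - x) - (2 + x) - (expR 0 * (2 - 0) - (2 + 0)) <= 0 -> expR x * (2 - x) <= 2 + x); rewrite expR0.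
lra.
Qed.
Lemma chern_an (mu d : R) : 0 <= mu -> 0 < d -> d < 1 ->
  - (3 * d / 5) * (mu * (1 + d)) + (expR (3 * d / 5) - 1) * mu <= - (mu * d ^+ 2 / 3).
Proof.
move=> m0 d0 d1.
have h := @exp_pade (3 * d / 5) ltac:(lra) ltac:(lra).
set E := expR (3 * d / 5) in h *.
have inner : - (3 * d / 5) * (1 + d) + (E - 1) + d ^+ 2 / 3 <= 0.
  have hE : E - 1 <= 2 * (3 * d / 5) / (2 - 3 * d / 5).
    rewrite ler_pdivlMr; last lra.
    lra.
  have : - (3 * d / 5) * (1 + d) + 2 * (3 * d / 5) / (2 - 3 * d / 5) + d ^+ 2 / 3 <= 0.
    have -> : 2 * (3 * d / 5) / (2 - 3 * d / 5) = 6 * d / (10 - 3 * d).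
      field; lra.
    have hq : 6 * d / (10 - 3 * d) <= 6 * d / 10 + d ^+ 2 * 13 / 50 .
      rewrite ler_pdivrMr; last lra.
      nra.
    nra.
  lra.
have := mulr_ge0_le0 m0 inner.
lra.
Qed.

End An.









Section Gen.
Variables (R : realType) (C : finType) (q : C -> R).
Hypothesis q01 : forall c, 0 <= q c <= 1.

Definition PW (x : {ffun C -> bool}) : R := \prod_c bern (q c) (x c).
Definition EP (F : {ffun C -> bool} -> R) : R := \sum_x PW x * F x.

Lemma bern_ge0 c b : 0 <= bern (q c) b.
Proof. by have := q01 c; case: b => /andP[h1 h2] /=; lra. Qed.

Lemma PW_ge0 x : 0 <= PW x.
Proof. by apply: prodr_ge0 => c _; apply: bern_ge0. Qed.

Lemma EP_ext F G : (forall x, F x = G x) -> EP F = EP G.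
Proof. by move=> h; apply: eq_bigr => x _; rewrite h. Qed.

Lemma EP_le F G : (forall x, F x <= G x) -> EP F <= EP G.
Proof. by move=> h; apply: ler_sum => x _; apply: ler_wpM2l; [apply: PW_ge0|]. Qed.

Lemma EPD F G : EP (fun x => F x + G x) = EP F + EP G.
Proof. by rewrite /EP -big_split /=; apply: eq_bigr => x _; rewrite mulrDr. Qed.

Lemma EPZ k F : EP (fun x => k * F x) = k * EP F.
Proof. by rewrite /EP mulr_sumr; apply: eq_bigr => x _; rewrite mulrCA. Qed.

Lemma EP_sum (I : finType) (P : pred I) (F : I -> {ffun C -> bool} -> R) :
  EP (fun x => \sum_(i | P i) F i x) = \sum_(i | P i) EP (F i).
Proof.
rewrite /EP exchange_big /=; apply: eq_bigr => x _.
by rewrite mulr_sumr.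
Qed.

Lemma EP_prodform (h : C -> bool -> R) :
  EP (fun x => \prod_c h c (x c)) = \prod_c (q c * h c true + (1 - q c) * h c false).
Proof.
rewrite /EP.
have -> : \prod_c (q c * h c true + (1 - q c) * h c false) =
          \prod_c \sum_(b : bool) bern (q c) b * h c b.
  by apply: eq_bigr => c _; rewrite big_bool /= addrC.
rewrite bigA_distr_bigA /=; apply: eq_bigr => x _.
by rewrite /PW -big_split.
Qed.

Lemma EP1 : EP (fun _ => 1) = 1.
Proof.
rewrite (EP_ext _ (fun x => \prod_c (fun _ _ => 1) c (x c))); last first.
  by move=> x; rewrite big1.
rewrite (EP_prodform (fun _ _ => 1)) big1 // => c _; ring.
Qed.

Lemma EP_const k : EP (fun _ => k) = k.
Proof. by rewrite (EP_ext _ (fun x => k * 1)) ?EPZ ?EP1 ?mulr1 // => x; rewrite mulr1. Qed.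

Lemma marg c0 (g : bool -> R) :
  EP (fun x => g (x c0)) = q c0 * g true + (1 - q c0) * g false.
Proof.
rewrite (EP_ext _ (fun x => \prod_c (fun c b => if c == c0 then g b else 1) c (x c))); last first.
  by move=> x; rewrite (bigD1 c0) //= eqxx big1 ?mulr1 // => c /negbTE ->.
rewrite (EP_prodform (fun c b => if c == c0 then g b else 1)) (bigD1 c0) //= eqxx big1 ?mulr1 // => c /negbTE ->; ring.
Qed.


Definition dep (S : pred C) (F : {ffun C -> bool} -> R) :=
  forall x y : {ffun C -> bool}, (forall c, S c -> x c = y c) -> F x = F y.
Definition mrg (S : pred C) (x y : {ffun C -> bool}) : {ffun C -> bool} :=
  [ffun c => if S c then x c else y c].

Lemma PW_mrg S (x y : {ffun C -> bool}) : PW x * PW y = PW (mrg S x y) * PW (mrg S y x).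
Proof.
rewrite /PW -!big_split /=; apply: eq_bigr => c _; rewrite !ffunE.
by case: (S c) => //; rewrite mulrC.
Qed.

Lemma mrgK S (x y : {ffun C -> bool}) : mrg S (mrg S x y) (mrg S y x) = x.
Proof. by apply/ffunP => c; rewrite !ffunE; case: (S c). Qed.

Lemma indep S F G : dep S F -> dep (predC S) G ->
  EP (fun x => F x * G x) = EP F * EP G.
Proof.
move=> dF dG.
rewrite /EP mulr_suml.
have e1 : \sum_x (PW x * F x) * \sum_y PW y * G y =
  \sum_x \sum_y (fun p : {ffun C -> bool} * {ffun C -> bool} =>
     PW p.1 * PW p.2 * (F p.1 * G p.1)) (mrg S x y, mrg S y x).
  apply: eq_bigr => x _; rewrite mulr_sumr; apply: eq_bigr => y _ /=.
  rewrite -(dF x (mrg S x y)); last by move=> c Sc; rewrite ffunE Sc.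
  rewrite -(dG y (mrg S x y)); last by move=> c Sc; rewrite ffunE (negbTE Sc).
  rewrite -PW_mrg; ring.
rewrite e1 pair_bigA /=.
rewrite -(reindex_inj (h := fun p => (mrg S p.1 p.2, mrg S p.2 p.1))
  (P := xpredT) (F := fun p : {ffun C -> bool} * {ffun C -> bool} =>
     PW p.1 * PW p.2 * (F p.1 * G p.1))); last first.
  move=> [x1 y1] [x2 y2] /= [h1 h2].
  have k1 := mrgK S x1 y1; have k2 := mrgK S y1 x1.
  rewrite h1 h2 mrgK in k1; rewrite h1 h2 mrgK in k2.
  by rewrite k1 k2.
rewrite -(pair_bigA _ (fun x y => PW x * PW y * (F x * G x))) /=; apply: eq_bigr => x _.
have e2 : \sum_y PW y = 1 by have := EP1; rewrite /EP => <-; apply: eq_bigr => y _; rewrite mulr1.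
rewrite -[LHS]mulr1 -e2 mulr_sumr; apply: eq_bigr => y _; ring.
Qed.


Lemma dep_sub (S S' : pred C) F : (forall c, S c -> S' c) -> dep S F -> dep S' F.
Proof. by move=> h d x y e; apply: d => c Sc; apply: e; apply: h. Qed.

Lemma dep_prod (I : eqType) (s : seq I) (P : pred I) (S : pred C)
  (G : I -> {ffun C -> bool} -> R) :
  (forall i, i \in s -> dep S (G i)) -> dep S (fun x => \prod_(i <- s | P i) G i x).
Proof.
move=> h x y e; rewrite (big_seq_cond P (fun i => G i x)) (big_seq_cond P (fun i => G i y)).
by apply: eq_bigr => i /andP[/h d _]; apply: d.
Qed.

Lemma EP_prod (I : eqType) (s : seq I) (P : pred I) (S : I -> pred C)
  (G : I -> {ffun C -> bool} -> R) :
  uniq s -> (forall i, i \in s -> dep (S i) (G i)) ->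
  (forall i j c, i \in s -> j \in s -> i != j -> S i c -> S j c -> False) ->
  EP (fun x => \prod_(i <- s | P i) G i x) = \prod_(i <- s | P i) EP (G i).
Proof.
elim: s => [|a s IH] /= us hd hdis.
  rewrite big_nil (EP_ext _ (fun _ => 1)) ?EP1 // => x; by rewrite big_nil.
move/andP: us => [nas us].
have ins : forall i, i \in s -> i \in a :: s by move=> i si; rewrite inE si orbT.
have IH' := IH us (fun i si => hd i (ins _ si))
  (fun i j c si sj => hdis i j c (ins _ si) (ins _ sj)).
rewrite big_cons.
case Pa: (P a); last first.
  by rewrite -IH'; apply: EP_ext => x; rewrite big_cons Pa.
rewrite -IH' -(indep (S a) (G a) (fun x => \prod_(i <- s | P i) G i x)).
- by apply: EP_ext => x; rewrite big_cons Pa.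
- by apply: hd; rewrite mem_head.
apply: dep_prod => i si.
apply: dep_sub (hd i (ins _ si)) => c Sic /=.
apply/negP => Sac.
apply: (hdis a i c) => //; first by rewrite mem_head.
  by rewrite ins.
by apply: contraNneq nas => ->.
Qed.

Lemma EP2 c1 c2 (g1 g2 : bool -> R) : c1 != c2 ->
  EP (fun x => g1 (x c1) * g2 (x c2)) = EP (fun x => g1 (x c1)) * EP (fun x => g2 (x c2)).
Proof.
move=> ne; apply: (indep (pred1 c1)).
- by move=> x y e; rewrite e //= eqxx.
- by move=> x y e; rewrite e //= eq_sym.
Qed.

End Gen.
Arguments PW {R C} q x.
Arguments EP {R C} q F.
Arguments dep {R C} S F.
Arguments bern_ge0 {R C q}.
Arguments PW_ge0 {R C q}.
Arguments EP_ext {R C q}.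
Arguments EP_le {R C q}.
Arguments EPD {R C q}.
Arguments EPZ {R C q}.
Arguments EP_sum {R C q}.
Arguments EP_prodform {R C q}.
Arguments EP1 {R C q}.
Arguments EP_const {R C q}.
Arguments marg {R C q}.
Arguments indep {R C q}.
Arguments dep_sub {R C}.
Arguments dep_prod {R C}.
Arguments EP_prod {R C q}.
Arguments EP2 {R C q}.


Section Model.
Variables (R : realType) (r n : nat) (p eps : R).
Hypotheses (p0 : 0 <= p) (p1 : p < 1/2) (e0 : 0 <= eps) (e1 : eps < 1).

Definition Cd : finType := (('I_r * 'I_r) + ('I_n * 'I_n) + ('I_n * 'I_n))%type.
Definition qd (c : Cd) : R :=
  match c with inl (inl _) => 1/2 | inl (inr _) => p | inr _ => eps end.

Lemma qd01 c : 0 <= qd c <= 1.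
Proof.
case: c => [[?|?]|?] /=; apply/andP; split => //; try lra.
- by apply: ltW; apply: lt_trans p1 _; lra.
- exact: ltW.
Qed.

Definition ofC (x : {ffun Cd -> bool}) : Omega r n :=
  ([ffun ij => x (inl (inl ij))], [ffun uv => x (inl (inr uv))], [ffun uv => x (inr uv)]).
Definition toC (w : Omega r n) : {ffun Cd -> bool} :=
  [ffun c => match c with inl (inl ij) => w.1.1 ij | inl (inr uv) => w.1.2 uv | inr uv => w.2 uv end].

Lemma ofCK : cancel ofC toC.
Proof. by move=> x; apply/ffunP => -[[?|?]|?]; rewrite !ffunE. Qed.
Lemma toCK : cancel toC ofC.
Proof.
by move=> [[x y] z]; rewrite /ofC /=; congr (_,_,_); apply/ffunP => ?; rewrite !ffunE.
Qed.

Lemma weightE w : weight p eps w = PW qd (toC w).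
Proof.
rewrite /weight /PW big_sumType big_sumType /=.
congr (_ * _ * _); apply: eq_bigr => ? _; by rewrite ffunE.
Qed.

Lemma ProbE (E : pred (Omega r n)) :
  Prob p eps E = EP qd (fun x => (E (ofC x))%:R).
Proof.
rewrite /Prob /EP big_mkcond /=.
rewrite (reindex ofC); last by exists toC => x _; [apply: ofCK | apply: toCK].
apply: eq_bigr => x _; rewrite weightE ofCK.
by case: (E (ofC x)); rewrite ?mulr1 ?mulr0.
Qed.

End Model.
Arguments qd {R r n} p eps c.
Arguments qd01 {R r n p eps}.
Arguments ofC {r n} x.
Arguments toC {r n} w.
Arguments ProbE {R r n} p eps E.

Section Model2.
Variables (R : realType) (r n : nat) (p eps : R).
Hypotheses (p0 : 0 <= p) (p1 : p < 1/2) (e0 : 0 <= eps) (e1 : eps < 1).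
Variables (a b : 'I_n -> 'I_r) (i0 : 'I_n).

Local Notation Cd := (Cd r n).
Local Notation qd := (@qd R r n p eps).
Local Notation EPq := (EP qd).
Let q01 := @qd01 R r n p eps p0 p1 e0 e1.

Definition XI (x : {ffun Cd -> bool}) t j := x (inl (inl (t, j))).
Definition FL (x : {ffun Cd -> bool}) u l := x (inl (inr (u, l))).
Definition ER (x : {ffun Cd -> bool}) u l := x (inr (u, l)).

Definition Zb x (i l : 'I_n) : bool :=
  [&& ~~ ER x i0 l, ~~ ER x i l & (FL x i0 l == FL x i l) == (XI x (a i0) (b l) == XI x (a i) (b l))].

Lemma simE x i : sim a b (ofC x) i0 i = (\sum_(l < n) Zb x i l)%N.
Proof.
apply: eq_bigr => l _; rewrite /Zb /Ymat /Xmat /ofC /= !ffunE /ER /FL /XI.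
case: (x (inr (i0, l))); case: (x (inr (i, l))) => //=.
by case: (x (inl (inl (a i0, b l)))); case: (x (inl (inl (a i, b l))));
   case: (x (inl (inr (i0, l)))); case: (x (inl (inr (i, l)))).
Qed.

Lemma EPc c : EPq (fun x => (x c)%:R) = qd c.
Proof. by rewrite (marg c (fun b : bool => b%:R)) /=; ring. Qed.

Lemma EPnc c : EPq (fun x => (~~ x c)%:R) = 1 - qd c.
Proof. by rewrite (marg c (fun b : bool => (~~ b)%:R)) /=; ring. Qed.


Lemma EPeq c (bb : bool) : EPq (fun x => (x c == bb)%:R) = if bb then qd c else 1 - qd c.
Proof. by rewrite (marg c (fun y : bool => (y == bb)%:R)); case: bb => /=; ring. Qed.

Lemma EPcc c1 c2 (b1 b2 : bool) : c1 != c2 ->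
  EPq (fun x => (x c1 == b1)%:R * (x c2 == b2)%:R) =
  (if b1 then qd c1 else 1 - qd c1) * (if b2 then qd c2 else 1 - qd c2).
Proof.
move=> ne; have := EP2 c1 c2 (fun y => (y == b1)%:R) (fun y => (y == b2)%:R) ne.
by rewrite /= => ->; rewrite !EPeq.
Qed.

Lemma EP_D t j : t != a i0 -> EPq (fun x => (XI x (a i0) j == XI x t j)%:R) = 1/2.
Proof.
move=> ht.
rewrite (EP_ext _ (fun x => (x (inl (inl (a i0, j))) == true)%:R * (x (inl (inl (t, j))) == true)%:R
   + (x (inl (inl (a i0, j))) == false)%:R * (x (inl (inl (t, j))) == false)%:R)); last first.
  by move=> x; rewrite /XI; case: (x _); case: (x _) => /=; ring.
have ne : (inl (inl (a i0, j)) : Cd) != inl (inl (t, j)).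
  by apply/eqP => -[] /eqP; rewrite eq_sym (negbTE ht).
rewrite EPD !EPcc //=; lra.
Qed.

Variables (delta : R).
Hypotheses (d0 : 0 < delta) (d1 : delta < 1).

Definition Mb x t := (\sum_(j < r) (XI x (a i0) j == XI x t j))%N.

Lemma expR_ind (l : R) (bb : bool) : expR (l * bb%:R) = 1 + (expR l - 1) * bb%:R.
Proof. by case: bb; rewrite /= ?mulr1 ?mulr0 ?expR0; ring. Qed.

Lemma chern1 t : t != a i0 ->
  EPq (fun x => ((r%:R * (1 + delta) / 2 : R) < (Mb x t)%:R)%R%:R) <= expR (- (r%:R * delta ^+ 2 / 6)).
Proof.
move=> ht.
have D0 := d0; have D1 := d1.
set l := 3 * delta / 5.
set th := r%:R * (1 + delta) / 2.
have l0 : 0 <= l by rewrite /l; lra.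
have step1 : forall x, ((th < (Mb x t)%:R)%R%:R : R) <=
   expR (- (l * th)) * \prod_(j <- index_enum 'I_r | xpredT j)
      (fun j x => expR (l * (XI x (a i0) j == XI x t j)%:R)) j x.
  move=> x.
  rewrite -expR_sum -expRD.
  have -> : \sum_(j <- index_enum 'I_r | xpredT j) l * (XI x (a i0) j == XI x t j)%:R
      = l * (Mb x t)%:R.
    by rewrite /Mb natr_sum mulr_sumr.
  case: ltrP => h /=; last exact: expR_ge0.
  have := expR_ge1Dx (- (l * th) + l * (Mb x t)%:R).
  have : 0 <= - (l * th) + l * (Mb x t)%:R by nra.
  lra.
apply: le_trans (EP_le q01 _ _ step1) _.
rewrite EPZ.
pose S1 := fun (j : 'I_r) (c : Cd) => match c with inl (inl (_, v)) => v == j | _ => false end.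
pose G1 := fun j x => expR (l * (XI x (a i0) j == XI x t j)%:R).
have hdep : forall j, j \in index_enum 'I_r -> dep (S1 j) (G1 j).
  move=> j _ x y e; rewrite /G1 /XI (e (inl (inl (a i0, j)))) /S1 ?eqxx //.
  by rewrite (e (inl (inl (t, j)))) /S1 ?eqxx.
have hdis : forall i j c, i \in index_enum 'I_r -> j \in index_enum 'I_r ->
    i != j -> S1 i c -> S1 j c -> False.
  move=> i j [[[u v]|?]|?] _ _ ne //= /eqP -> /eqP h.
  by rewrite h eqxx in ne.
rewrite (EP_prod _ (index_enum 'I_r) xpredT S1 G1 (index_enum_uniq _) hdep hdis).
have hG : forall j, EPq (G1 j) = 1 + (expR l - 1) / 2.
  move=> j; rewrite (EP_ext _ (fun x => 1 + (expR l - 1) * (XI x (a i0) j == XI x t j)%:R)); last first.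
    by move=> x; rewrite /G1 expR_ind.
  by rewrite EPD EP_const EPZ EP_D // mul1r.
rewrite (eq_bigr _ (fun j _ => hG j)).
rewrite prodr_const card_ord.
have el : 1 <= expR l by have := expR_ge1Dx l; lra.
have hb : (1 + (expR l - 1) / 2) ^+ r <= expR (r%:R * ((expR l - 1) / 2)).
  rewrite expRM_natl; apply: lerXn2r; rewrite ?nnegrE; try lra.
    exact: expR_ge0.
  have := expR_ge1Dx ((expR l - 1) / 2); lra.
apply: le_trans (ler_wpM2l (expR_ge0 _) hb) _.
rewrite -expRD ler_expR.
have := @chern_an R (r%:R / 2) delta (ltac:(by rewrite divr_ge0 ?ler0n)) D0 D1.
have -> : - (l * th) + r%:R * ((expR l - 1) / 2) =
  - (3 * delta / 5) * (r%:R / 2 * (1 + delta)) + (expR (3 * delta / 5) - 1) * (r%:R / 2).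
  by rewrite /l /th; ring.
have -> : - (r%:R * delta ^+ 2 / 6) = - (r%:R / 2 * delta ^+ 2 / 3) by field.
by [].
Qed.


End Model2.
Arguments XI {r n} x t j.
Arguments FL {r n} x u l.
Arguments ER {r n} x u l.
Arguments Zb {r n} a b i0 x i l.
Arguments Mb {r n} a i0 x t.

Section Chern2.
Variables (R : realType) (r n k : nat) (p eps : R).
Hypotheses (p0 : 0 <= p) (p1 : p < 1/2) (e0 : 0 <= eps) (e1 : eps < 1).
Variables (a b : 'I_n -> 'I_r) (i0 : 'I_n).
Hypothesis hn : n = (r * k)%N.
Hypothesis hb : forall t : 'I_r, #|[pred v | b v == t]| = k.
Variables (delta : R).
Hypotheses (d0 : 0 < delta) (d1 : delta < 1).

Local Notation Cd := (Cd r n).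
Local Notation qd := (@qd R r n p eps).
Local Notation EPq := (EP qd).
Let q01 := @qd01 R r n p eps p0 p1 e0 e1.

Definition Zd (d : bool) (x : {ffun Cd -> bool}) (i l : 'I_n) : bool :=
  [&& ~~ ER x i0 l, ~~ ER x i l & (FL x i0 l == FL x i l) == d].

Lemma EP_fl (c1 c2 : Cd) (d : bool) : c1 != c2 ->
  EPq (fun x => ((x c1 == x c2) == d)%:R) =
  qd c1 * (if d then qd c2 else 1 - qd c2) + (1 - qd c1) * (if d then 1 - qd c2 else qd c2).
Proof.
move=> ne.
rewrite (EP_ext _ (fun x => (x c1 == true)%:R * (x c2 == d)%:R + (x c1 == false)%:R * (x c2 == ~~ d)%:R)); last first.
  by move=> x; case: (x c1); case: (x c2); case: d => /=; ring.
by rewrite EPD !(@EPcc R r n p eps) //; case: d.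
Qed.


Lemma EP_single (c : Cd) (g : bool -> R) G : dep (predC (pred1 c)) G ->
  EPq (fun x => g (x c) * G x) = EPq (fun x => g (x c)) * EPq G.
Proof.
move=> dG; apply: (indep (pred1 c)) => //.
by move=> x y e; rewrite e //= eqxx.
Qed.

Definition qq (d : bool) : R := p * (if d then p else 1 - p) + (1 - p) * (if d then 1 - p else p).

Lemma EP_Zd d i l0 : i != i0 ->
  EPq (fun x => (Zd d x i l0)%:R) = (1 - eps) * ((1 - eps) * qq d).
Proof.
move=> ne.
rewrite (EP_ext _ (fun x => (x (inr (i0, l0)) == false)%:R * ((x (inr (i, l0)) == false)%:R *
   ((x (inl (inr (i0, l0))) == x (inl (inr (i, l0)))) == d)%:R))); last first.
  move=> x; rewrite /Zd /ER /FL.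
  by case: (x (inr (i0, l0))); case: (x (inr (i, l0))); rewrite /= ?mul1r ?mul0r ?mulr0.
rewrite (EP_single (inr (i0, l0)) (fun y => (y == false)%:R)); last first.
  have ne' : (inr (i, l0) : Cd) != inr (i0, l0).
    by apply/eqP => -[h]; rewrite h eqxx in ne.
  move=> x y e; rewrite (e (inr (i, l0))) /=; last by rewrite ne'.
  by rewrite (e (inl (inr (i0, l0)))) // (e (inl (inr (i, l0)))).
rewrite (EP_single (inr (i, l0)) (fun y => (y == false)%:R)); last first.
  by move=> x y e; rewrite (e (inl (inr (i0, l0)))) // (e (inl (inr (i, l0)))).
rewrite !(@EPeq R r n p eps) EP_fl //.
by apply/eqP => -[h]; rewrite h eqxx in ne.
Qed.


Definition Hp (lam : R) (d : bool) (j : 'I_r) (i : 'I_n) (x : {ffun Cd -> bool}) : R :=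
  \prod_(l0 <- index_enum 'I_n | b l0 == j) expR (lam * (Zd d x i l0)%:R).

Lemma prod_b (j : 'I_r) (C0 : R) : \prod_(l0 <- index_enum 'I_n | b l0 == j) C0 = C0 ^+ k.
Proof.
rewrite -(hb j) -prodr_const.
by apply: eq_bigl => l0; rewrite inE.
Qed.

Lemma EP_H lam d j i : i != i0 ->
  EPq (Hp lam d j i) = (1 + (expR lam - 1) * ((1 - eps) * ((1 - eps) * qq d))) ^+ k.
Proof.
move=> ne.
pose S3 := fun (l0 : 'I_n) (c : Cd) => match c with inl (inr (_, m)) => m == l0 | inr (_, m) => m == l0 | _ => false end.
pose G3 := fun l0 x => expR (lam * (Zd d x i l0)%:R).
have hdep : forall l0, l0 \in index_enum 'I_n -> dep (S3 l0) (G3 l0).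
  move=> l0 _ x y e; rewrite /G3 /Zd /ER /FL.
  by rewrite (e (inr (i0, l0))) ?(e (inr (i, l0))) ?(e (inl (inr (i0, l0)))) ?(e (inl (inr (i, l0)))) /S3 ?eqxx.
have hdis : forall i1 j1 c, i1 \in index_enum 'I_n -> j1 \in index_enum 'I_n ->
    i1 != j1 -> S3 i1 c -> S3 j1 c -> False.
  move=> i1 j1 [[?|[u v]]|[u v]] _ _ ne1 //= /eqP -> /eqP h; by rewrite h eqxx in ne1.
rewrite /Hp (EP_prod _ (index_enum 'I_n) (fun l0 => b l0 == j) S3 G3 (index_enum_uniq _) hdep hdis).
rewrite -(prod_b j); apply: eq_bigr => l0 _.
rewrite (EP_ext _ (fun x => 1 + (expR lam - 1) * (Zd d x i l0)%:R)); last first.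
  by move=> x; rewrite /G3 expR_ind.
by rewrite EPD EP_const EPZ EP_Zd.
Qed.

Definition G2 (lam nu : R) (j : 'I_r) (i : 'I_n) (x : {ffun Cd -> bool}) : R :=
  expR (- (nu * (XI x (a i0) j == XI x (a i) j)%:R)) *
  \prod_(l0 <- index_enum 'I_n | b l0 == j) expR (lam * (Zb a b i0 x i l0)%:R).

Lemma EP_G2 lam nu j i : a i != a i0 ->
  EPq (G2 lam nu j i) =
  1/2 * (expR (- nu) * (1 + (expR lam - 1) * ((1 - eps) * ((1 - eps) * qq true))) ^+ k)
  + 1/2 * (1 + (expR lam - 1) * ((1 - eps) * ((1 - eps) * qq false))) ^+ k.
Proof.
move=> hai.
have ne : i != i0 by apply: contraNneq hai => ->.
rewrite (EP_ext _ (fun x => (XI x (a i0) j == XI x (a i) j)%:R * (expR (- nu) * Hp lam true j i x)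
   + (~~ (XI x (a i0) j == XI x (a i) j))%:R * Hp lam false j i x)); last first.
  move=> x; rewrite /G2 /Hp.
  have hz : forall dd, (XI x (a i0) j == XI x (a i) j) = dd ->
      \prod_(l0 <- index_enum 'I_n | b l0 == j) expR (lam * (Zb a b i0 x i l0)%:R) =
      \prod_(l0 <- index_enum 'I_n | b l0 == j) expR (lam * (Zd dd x i l0)%:R).
    move=> dd hd; apply: eq_bigr => l0 /eqP hl.
    by rewrite /Zb /Zd hl hd.
  case hD: (XI x (a i0) j == XI x (a i) j).
    by rewrite (hz true hD) /= mulr1 mul1r mul0r addr0.
  by rewrite (hz false hD) /= mulr0 oppr0 expR0 !mul1r mul0r add0r.
pose Sx := fun c : Cd => match c with inl (inl _) => true | _ => false end.
have dD : forall (g : bool -> R), dep Sx (fun x => g (XI x (a i0) j == XI x (a i) j)).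
  by move=> g x y e; rewrite /XI (e (inl (inl (a i0, j)))) // (e (inl (inl (a i, j)))).
have dH : forall dd, dep (predC Sx) (Hp lam dd j i).
  move=> dd x y e; rewrite /Hp; apply: eq_bigr => l0 _; rewrite /Zd /ER /FL.
  by rewrite (e (inr (i0, l0))) ?(e (inr (i, l0))) ?(e (inl (inr (i0, l0)))) ?(e (inl (inr (i, l0)))).
rewrite EPD (indep Sx _ _ (dD (fun y => y%:R))); last first.
  by move=> x y e; rewrite (dH true x y e).
rewrite (indep Sx _ _ (dD (fun y => (~~ y)%:R)) (dH false)).
rewrite EPZ !EP_H // (@EP_D R r n p eps a i0 (a i) j hai).
rewrite (EP_ext _ (fun x => 1 + (-1) * (XI x (a i0) j == XI x (a i) j)%:R)); last first.
  by move=> x; case: (XI x _ _ == _) => /=; ring.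
rewrite EPD EP_const EPZ (@EP_D R r n p eps a i0 (a i) j hai).
have -> : (1 + -1 * (1 / 2) : R) = 1 / 2 by field.
by [].
Qed.


Lemma chern2 i : a i != a i0 ->
  EPq (fun x => ((n%:R * ((1 - eps) ^+ 2 / 2) * (1 + delta) ^+ 2 <=
           ((\sum_(l0 < n) Zb a b i0 x i l0)%N)%:R) &&
         ((Mb a i0 x (a i))%:R <= r%:R * (1 + delta) / 2))%R%:R)
  <= expR (- (n%:R * ((1 - eps) ^+ 2 / 2) * delta ^+ 2 / 3)).
Proof.
move=> hai.
have D0 := d0; have D1 := d1; have P0 := p0; have P1 := p1; have E0 := e0; have E1 := e1.
set lam := 3 * delta / 5.
have lam0 : 0 <= lam by rewrite /lam; lra.
set E := expR lam - 1.
have E0' : 0 <= E by have := expR_ge1Dx lam; rewrite /E; lra.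
set xA := E * ((1 - eps) * ((1 - eps) * qq true)).
set xB := E * ((1 - eps) * ((1 - eps) * qq false)).
have qT0 : 0 <= qq false <= qq true.
  by rewrite /qq /=; apply/andP; split; nra.
have xB0 : 0 <= xB by rewrite /xB; apply: mulr_ge0 => //; apply: mulr_ge0; [lra|]; apply: mulr_ge0; [lra|]; case/andP: qT0.
have xBA : xB <= xA.
  rewrite /xA /xB; apply: ler_wpM2l => //; apply: ler_wpM2l; [lra|]; apply: ler_wpM2l; [lra|]; by case/andP: qT0.
have [al hal] := expR_total (ltac:(lra) : 0 < 1 + xA).
have [be hbe] := expR_total (ltac:(lra) : 0 < 1 + xB).
have alx : al <= xA by rewrite -ler_expR hal; have := expR_ge1Dx xA; lra.
have bex : be <= xB by rewrite -ler_expR hbe; have := expR_ge1Dx xB; lra.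
have albe : be <= al by rewrite -ler_expR hal hbe; lra.
set nu := k%:R * (al - be).
have nu0 : 0 <= nu by rewrite /nu; apply: mulr_ge0; [rewrite ler0n|lra].
set T := n%:R * ((1 - eps) ^+ 2 / 2) * (1 + delta) ^+ 2.
set th := r%:R * (1 + delta) / 2.
have step1 : forall x, ((T <= ((\sum_(l0 < n) Zb a b i0 x i l0)%N)%:R) &&
         ((Mb a i0 x (a i))%:R <= th))%R%:R <=
    expR (- (lam * T) + nu * th) * \prod_(j <- index_enum 'I_r | xpredT j) G2 lam nu j i x.
  move=> x.
  have hprod : \prod_(j <- index_enum 'I_r | xpredT j) G2 lam nu j i x =
     expR (\sum_(j <- index_enum 'I_r | xpredT j) (- (nu * (XI x (a i0) j == XI x (a i) j)%:R) +
        \sum_(l0 <- index_enum 'I_n | b l0 == j) lam * (Zb a b i0 x i l0)%:R)).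
    rewrite expR_sum; apply: eq_bigr => j _; by rewrite /G2 expRD expR_sum.
  have hs : (((\sum_(l0 < n) Zb a b i0 x i l0)%N)%:R : R) =
      \sum_(j <- index_enum 'I_r | xpredT j) \sum_(l0 <- index_enum 'I_n | b l0 == j) (Zb a b i0 x i l0)%:R.
    by rewrite natr_sum (partition_big b xpredT).
  have hexp : \sum_(j <- index_enum 'I_r | xpredT j) (- (nu * (XI x (a i0) j == XI x (a i) j)%:R) +
        \sum_(l0 <- index_enum 'I_n | b l0 == j) lam * (Zb a b i0 x i l0)%:R) =
      lam * (((\sum_(l0 < n) Zb a b i0 x i l0)%N)%:R) - nu * (Mb a i0 x (a i))%:R.
    rewrite big_split /= sumrN addrC hs mulr_sumr /Mb natr_sum mulr_sumr; congr (_ - _).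
    by apply: eq_bigr => j _; rewrite mulr_sumr.
  rewrite hprod -expRD hexp.
  case: andP => [[h1 h2]|_] /=; last exact: expR_ge0.
  have : 0 <= - (lam * T) + nu * th + (lam * (((\sum_(l0 < n) Zb a b i0 x i l0)%N)%:R) - nu * (Mb a i0 x (a i))%:R).
    have : 0 <= lam * (((\sum_(l0 < n) Zb a b i0 x i l0)%N)%:R - T) by apply: mulr_ge0; lra.
    have : 0 <= nu * (th - (Mb a i0 x (a i))%:R) by apply: mulr_ge0; lra.
    lra.
  move=> hge; have := expR_ge1Dx (- (lam * T) + nu * th + (lam * (((\sum_(l0 < n) Zb a b i0 x i l0)%N)%:R) - nu * (Mb a i0 x (a i))%:R)).
  lra.
apply: le_trans (EP_le q01 _ _ step1) _.
rewrite EPZ.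
pose S2 := fun (j : 'I_r) (c : Cd) => match c with inl (inl (_, v)) => v == j
   | inl (inr (_, m)) => b m == j | inr (_, m) => b m == j end.
have hdep : forall j, j \in index_enum 'I_r -> dep (S2 j) (G2 lam nu j i).
  move=> j _ x y e; rewrite /G2 /XI (e (inl (inl (a i0, j)))) /S2 ?eqxx //.
  rewrite (e (inl (inl (a i, j)))) /S2 ?eqxx //; congr (_ * _).
  apply: eq_bigr => l0 hl; rewrite /Zb /ER /FL /XI.
  rewrite (e (inr (i0, l0))) // (e (inr (i, l0))) // (e (inl (inr (i0, l0)))) //.
  by rewrite (e (inl (inr (i, l0)))) // (e (inl (inl (a i0, b l0)))) // (e (inl (inl (a i, b l0)))).
have hdis : forall i1 j1 c, i1 \in index_enum 'I_r -> j1 \in index_enum 'I_r ->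
    i1 != j1 -> S2 i1 c -> S2 j1 c -> False.
  move=> i1 j1 [[[u v]|[u v]]|[u v]] _ _ ne1 //= /eqP -> /eqP h; by rewrite h eqxx in ne1.
rewrite (EP_prod _ (index_enum 'I_r) xpredT S2 (fun j => G2 lam nu j i) (index_enum_uniq _) hdep hdis).
have hG : forall j, EPq (G2 lam nu j i) = expR (k%:R * be).
  move=> j; rewrite EP_G2 // -/E -/xA -/xB -hal -hbe -!expRM_natl -expRD.
  have -> : - nu + k%:R * al = k%:R * be by rewrite /nu; ring.
  lra.
rewrite (eq_bigr _ (fun j _ => hG j)) prodr_const card_ord -expRM_natl -expRD ler_expR.
have hN : (n%:R : R) = r%:R * k%:R by rewrite hn natrM.
have N0 : (0 : R) <= n%:R by rewrite ler0n.
have h1 : nu * th + r%:R * (k%:R * be) = n%:R * (1 + delta) / 2 * al + n%:R * (1 - delta) / 2 * be.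
  by rewrite /nu /th hN; field.
have h2 : n%:R * (1 + delta) / 2 * al <= n%:R * (1 + delta) / 2 * xA.
  by apply: ler_wpM2l => //; apply: divr_ge0; [apply: mulr_ge0; lra | lra].
have h3 : n%:R * (1 - delta) / 2 * be <= n%:R * (1 - delta) / 2 * xB.
  by apply: ler_wpM2l => //; apply: divr_ge0; [apply: mulr_ge0; lra | lra].
have h4 : n%:R * (1 + delta) / 2 * xA + n%:R * (1 - delta) / 2 * xB =
   n%:R * E * (1 - eps) ^+ 2 / 2 * ((1 + delta) * qq true + (1 - delta) * qq false).
  by rewrite /xA /xB; ring.
have h5 : (1 + delta) * qq true + (1 - delta) * qq false <= 1 + delta.
  have : 0 <= delta * (p * (1 - p)) by apply: mulr_ge0; [lra | apply: mulr_ge0; lra].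
  rewrite /qq /=; nra.
have h6 : n%:R * E * (1 - eps) ^+ 2 / 2 * ((1 + delta) * qq true + (1 - delta) * qq false)
    <= n%:R * E * (1 - eps) ^+ 2 / 2 * (1 + delta).
  apply: ler_wpM2l => //; apply: divr_ge0; last lra.
  by apply: mulr_ge0; [apply: mulr_ge0 | apply: sqr_ge0].
set mu := n%:R * ((1 - eps) ^+ 2 / 2) * (1 + delta).
have mu0 : 0 <= mu.
  rewrite /mu; apply: mulr_ge0; last lra.
  by apply: mulr_ge0 => //; apply: divr_ge0; [apply: sqr_ge0|lra].
have h7 := @chern_an R mu delta mu0 D0 D1.
rewrite -/lam -/E in h7.
have h8 : - (mu * delta ^+ 2 / 3) <= - (n%:R * ((1 - eps) ^+ 2 / 2) * delta ^+ 2 / 3).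
  rewrite lerN2 /mu; apply: ler_wpM2r; first lra.
  apply: ler_wpM2r; first by apply: sqr_ge0.
  rewrite -[X in X <= _]mulr1; apply: ler_wpM2l; last lra.
  by apply: mulr_ge0 => //; apply: divr_ge0; [apply: sqr_ge0|lra].
have h9 : - (lam * T) + n%:R * E * (1 - eps) ^+ 2 / 2 * (1 + delta) =
   - lam * (mu * (1 + delta)) + E * mu.
  by rewrite /T /mu; ring.
lra.
Qed.

End Chern2.

Lemma sum_const_card (R : realType) (I : finType) (P : pred I) (c : R) :
  \sum_(i | P i) c = #|[pred i | P i]|%:R * c.
Proof.
rewrite (eq_bigl (fun i => i \in [pred i | P i])); last by move=> i; rewrite inE.
by rewrite sumr_const mulr_natl.
Qed.

Theorem lemma2 (R : realType) (r k n : nat) (a b : 'I_n -> 'I_r) (i0 : 'I_n)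
  (p eps delta : R) :
  n = (r * k)%N ->
  (forall t : 'I_r, #|[pred u | a u == t]| = k) ->
  (forall t : 'I_r, #|[pred v | b v == t]| = k) ->
  0 <= p -> p < 1/2 -> 0 <= eps -> eps < 1 ->
  0 < delta -> delta < 1 ->
  let pb := (1 - eps) ^+ 2 / 2 in
  Prob p eps (fun w : Omega r n =>
    [exists i : 'I_n, (a i != a i0) &&
       (n%:R * pb * (1 + delta) ^+ 2 <= (sim a b w i0 i)%:R)])
  <= (n - k)%:R * expR (- (n%:R * pb * delta ^+ 2 / 3))
     + 2 * r%:R * expR (- (r%:R * delta ^+ 2 / 6)).
Proof.
move=> hn ha hb p0 p1 e0 e1 d0 d1.
rewrite [X in is_true X]/=.
rewrite (ProbE p eps).
pose T := n%:R * ((1 - eps) ^+ 2 / 2) * (1 + delta) ^+ 2 : R.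
pose th := r%:R * (1 + delta) / 2 : R.
have q01 := @qd01 R r n p eps p0 p1 e0 e1.
have hpt : forall x : {ffun Cd r n -> bool},
  ([exists i : 'I_n, (a i != a i0) &&
       (n%:R * ((1 - eps) ^+ 2 / 2) * (1 + delta) ^+ 2 <= (sim a b (ofC x) i0 i)%:R)%R]%:R : R)
  <= \sum_(t | t != a i0) ((th < (Mb a i0 x t)%:R)%R%:R : R)
   + \sum_(i | a i != a i0) (((T <= ((\sum_(l0 < n) Zb a b i0 x i l0)%N)%:R) &&
         ((Mb a i0 x (a i))%:R <= th))%R%:R : R).
  move=> x.
  have s1 : 0 <= \sum_(t | t != a i0) ((th < (Mb a i0 x t)%:R)%R%:R : R).
    by apply: sumr_ge0 => t _; rewrite ler0n.
  have s2 : 0 <= \sum_(i | a i != a i0) (((T <= ((\sum_(l0 < n) Zb a b i0 x i l0)%N)%:R) &&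
         ((Mb a i0 x (a i))%:R <= th))%R%:R : R).
    by apply: sumr_ge0 => t _; rewrite ler0n.
  case: existsP => [[i /andP[hai hT]]|_]; last by rewrite /=; lra.
  rewrite simE in hT.
  case: (leP ((Mb a i0 x (a i))%:R) th) => hM.
    rewrite (bigD1 i) //= -/T hT hM /=.
    have : 0 <= \sum_(i1 | (a i1 != a i0) && (i1 != i)) (((T <= ((\sum_(l0 < n) Zb a b i0 x i1 l0)%N)%:R) &&
         ((Mb a i0 x (a i1))%:R <= th))%R%:R : R).
      by apply: sumr_ge0 => t _; rewrite ler0n.
    lra.
  rewrite (bigD1 (a i)) //= hM /=.
  have : 0 <= \sum_(t | (t != a i0) && (t != a i)) ((th < (Mb a i0 x t)%:R)%R%:R : R).
    by apply: sumr_ge0 => t _; rewrite ler0n.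
  lra.
apply: le_trans (EP_le q01 _ _ hpt) _.
rewrite EPD !EP_sum.
rewrite [X in _ <= X]addrC; apply: lerD.
  apply: le_trans (ler_sum _ (fun t (ht : t != a i0) =>
     @chern1 R r n p eps p0 p1 e0 e1 a i0 delta d0 d1 t ht)) _.
  rewrite sum_const_card; apply: ler_wpM2r; first exact: expR_ge0.
  have hc : (#|[pred t : 'I_r | t != a i0]| <= r)%N by rewrite -[X in (_ <= X)%N]card_ord max_card.
  have : (#|[pred t : 'I_r | t != a i0]|%:R : R) <= r%:R by rewrite ler_nat.
  have : (0 : R) <= r%:R by rewrite ler0n.
  lra.
apply: le_trans (ler_sum _ (fun i (hi : a i != a i0) =>
   @chern2 R r n k p eps p0 p1 e0 e1 a b i0 hn hb delta d0 d1 i hi)) _.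
rewrite sum_const_card.
have -> : #|[pred i : 'I_n | a i != a i0]| = (n - k)%N.
  have hc := cardC [pred u : 'I_n | a u == a i0]; rewrite ha card_ord in hc.
  rewrite (_ : (n - k)%N = ((k + #|[predC [pred u : 'I_n | a u == a i0]]|) - k)%N); last by rewrite hc.
  rewrite addKn; apply: eq_card => u; by rewrite !inE.
by [].
Qed.
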